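(* Let $v:\mathbb{R}\to(0,\infty)$ be decreasing on $(-\infty,0]$ and increasing on $[0,\infty)$, with $v(0)\ge1$. Then $v$ is admissible if and only if \[\sup_{t\in\mathbb{R}}\frac{v(2t)}{v(t)}<\infty.\]
   Context: A measurable function $v:\mathbb{R}\to(0,\infty)$ is called admissible if $v(s)\ge1$ for all $s\in\mathbb{R}$ and $\sup_{s,t\in\mathbb{R}}\frac{v(s+t)}{v(s)+v(t)}<\infty$. *)

(* Defs.v *)
From HB Require Import structures.
From mathcomp Require Import all_boot all_order all_algebra.
From mathcomp Require Import all_classical all_reals all_analysis.
Set Implicit Arguments. Unset Strict Implicit. Unset Printing Implicit Defensive.
Import Order.TTheory GRing.Theory Num.Theory.
Local Open Scope classical_set_scope.
Local Open Scope ring_scope.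

(* v is admissible: measurable, v >= 1, and sup_{s,t} v(s+t)/(v s + v t) < oo
   (the quotient is a positive real, so "sup < oo" = bounded above). *)
Definition admissible (R : realType) (v : R -> R) : Prop :=
  measurable_fun setT v /\
  (forall s : R, 1 <= v s) /\
  (exists C : R, forall s t : R, v (s + t) / (v s + v t) <= C).

(* Main.v *)
Require Import Defs.
From HB Require Import structures.
From mathcomp Require Import all_boot all_order all_algebra.
From mathcomp Require Import all_classical all_reals all_analysis.
From mathcomp Require Import ring lra measurable_realfun.
Import Order.TTheory GRing.Theory Num.Theory.
Local Open Scope classical_set_scope.
Local Open Scope ring_scope.

Theorem lemma2p2 (R : realType) (v : R -> R)
  (vpos : forall t : R, 0 < v t)
  (vdec : forall s t : R, s <= t -> t <= 0 -> v t <= v s)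
  (vinc : forall s t : R, 0 <= s -> s <= t -> v s <= v t)
  (v0 : 1 <= v 0) :
  admissible v <-> (exists C : R, forall t : R, v (2 * t) / v t <= C).
Proof.
have vge : forall s, v 0 <= v s.
  move=> s; case: (leP 0 s) => hs; first exact: vinc.
  by apply: vdec => //; exact: ltW.
split.
  move=> [_ [_ [C HC]]]; exists (2 * C) => t.
  have h := HC t t; have vt := vpos t.
  rewrite ler_pdivrMr ?addr_gt0 // in h; rewrite ler_pdivrMr //.
  have -> : 2 * t = t + t by rewrite mulr_natl mulr2n.
  apply: le_trans h _.
  by rewrite le_eqVlt; apply/orP; left; apply/eqP; ring.
move=> [C HC]; split.
  have -> : v = (fun x => v (Num.max x 0)) \max (fun x => v (Num.min x 0)).
    apply: funext => x /=.
    case: (leP 0 x) => hx.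
      by rewrite (max_l (vge x)).
    by rewrite (max_r (vge x)).
  apply: measurable_maxr.
    apply: nondecreasing_measurable => // x y xy /=.
    apply: vinc; first by rewrite le_max lexx orbT.
    by rewrite ge_max !le_max xy lexx orbT.
  apply: nonincreasing_measurable => // x y xy /=.
  apply: vdec; last by rewrite ge_min lexx orbT.
  by rewrite le_min !ge_min xy lexx orbT.
split; first by move=> s; apply: le_trans v0 (vge s).
have C0 : 0 < C.
  apply: lt_le_trans (HC 0); rewrite mulr0 divr_gt0 //.
exists C => s t.
have vs := vpos s; have vt := vpos t.
rewrite ler_pdivrMr ?addr_gt0 //.
suff [m [hm1 hm2]] : exists m, v (s + t) <= v (2 * m) /\ (m = s \/ m = t).
  apply: le_trans hm1 _.
  have hm := HC m; have vm := vpos m.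
  rewrite ler_pdivrMr // in hm; apply: le_trans hm _.
  rewrite ler_pM2l //.
  by case: hm2 => ->; [rewrite lerDl ltW | rewrite lerDr ltW].
case: (leP 0 (s + t)) => hst.
  exists (Num.max s t); split; last by rewrite /Num.max; case: ifP; auto.
  apply: vinc => //.
  have h1 : s <= Num.max s t by rewrite le_max lexx.
  have h2 : t <= Num.max s t by rewrite le_max lexx orbT.
  by rewrite mulr_natl mulr2n; exact: lerD.
exists (Num.min s t); split; last by rewrite /Num.min; case: ifP; auto.
apply: vdec; last exact: ltW.
have h1 : Num.min s t <= s by rewrite ge_min lexx.
have h2 : Num.min s t <= t by rewrite ge_min lexx orbT.
by rewrite mulr_natl mulr2n; exact: lerD.
Qed.
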